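(* If $A$ is a normal uniform Kan complex, then the canonical map $p:A^{\mathrm{I}}\to A\times A$ admits the structure of a normal uniform Kan fibration.
   Context: Let $\mathbb{B}$ be the category of finite sets $[n]=\{\bot,x_1,\dots,x_n,\top\}$ ($n\ge0$, $\bot\ne\top$) and functions preserving $\bot,\top$; cartesian cubical sets are presheaves on $\mathbb{B}^{op}$. $\mathrm{I}^n$ is the representable on $[n]$, $\mathrm{I}^n\cong\mathrm{I}\times\dots\times\mathrm{I}$, $\mathrm{I}=\mathrm{I}^1$, $\mathrm{I}^0=1$; the two maps $[1]\to[0]$ give endpoints $0,1:1\to\mathrm{I}$, and $p:A^{\mathrm{I}}\to A^{\partial\mathrm{I}}\cong A\times A$ is induced by the copairing $\partial\mathrm{I}=1+1\to\mathrm{I}$. For $1\le i\le n$, $d\in\{0,1\}$, the face $\alpha_i^d:\mathrm{I}^{n-1}\to\mathrm{I}^n$ inserts $d$ in coordinate $i$; for $e\in\{0,1\}$ the open box $\sqcup^n_e\rightarrowtail\mathrm{I}^n$ is the union of the images of all faces $\alpha_i^d$ with $(i,d)\ne(1,e)$, with inclusion $i^n_e$. A uniform Kan fibration structure on $f:Y\to X$: for each $n\ge1$, $e\in\{0,1\}$, $k\ge1$ and commutative square $b:\mathrm{I}^k\times\sqcup^n_e\to Y$, $a:\mathrm{I}^k\times\mathrm{I}^n\to X$ with $fb=a(1\times i^n_e)$, a chosen filler $\phi(a,b)$ ($\phi(a,b)(1\times i^n_e)=b$, $f\phi(a,b)=a$) with $\phi(a,b)(\alpha\times1)=\phi(a(\alpha\times1),b(\alpha\times1))$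 for all $\alpha:\mathrm{I}^j\to\mathrm{I}^k$ ($j\ge1$). It is normal if for all $n\ge0$, $e\in\{0,1\}$, $k\ge1$ and every $c:\mathrm{I}^k\times\mathrm{I}^n\to Y$, letting $\pi:\mathrm{I}^{n+1}\to\mathrm{I}^n$ be the projection forgetting the first coordinate, $\phi\big(f c(1\times\pi),\ c(1\times\pi)(1\times i^{n+1}_e)\big)=c(1\times\pi)$. A (normal) uniform Kan complex is a cubical set $A$ with a (normal) uniform Kan fibration structure on $A\to1$. *)

(* Defs.v *)
From HB Require Import structures.
From mathcomp Require Import all_boot.
From Stdlib Require Import FunctionalExtensionality ProofIrrelevance.

Set Implicit Arguments.
Unset Strict Implicit.
Unset Printing Implicit Defensive.

(* The set [n] = {bot, x_1, ..., x_n, top} is  Pt n = bool + 'I_n :   *)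
(*   inl false = bot,  inl true = top,  inr i = x_(i+1).              *)
Definition Pt (n : nat) : Type := (bool + 'I_n)%type.

Record Bmor (n m : nat) := BMor {
  bfun :> Pt n -> Pt m;
  bfun_bot : bfun (inl false) = inl false;
  bfun_top : bfun (inl true) = inl true }.

Lemma Bmor_eq n m (f g : Bmor n m) : (forall x, f x = g x) -> f = g.
Proof.
case: f g => f f0 f1 [g g0 g1] /= E.
have Efg : f = g by apply: functional_extensionality.
subst g; f_equal; apply: proof_irrelevance.
Qed.

Definition bid n : Bmor n n := @BMor n n (fun x => x) erefl erefl.

Lemma bcomp_bot n m l (g : Bmor m l) (f : Bmor n m) :
  g (f (inl false)) = inl false.
Proof. by rewrite !bfun_bot. Qed.
Lemma bcomp_top n m l (g : Bmor m l) (f : Bmor n m) :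
  g (f (inl true)) = inl true.
Proof. by rewrite !bfun_top. Qed.

Definition bcomp n m l (g : Bmor m l) (f : Bmor n m) : Bmor n l :=
  @BMor n l (fun x => g (f x)) (bcomp_bot g f) (bcomp_top g f).

Definition ptmap n m (h : 'I_n -> 'I_m) (x : Pt n) : Pt m :=
  match x with inl b => inl b | inr i => inr (h i) end.

(* The B-map [n+1] -> [n] sending x_i to the endpoint d (and renumbering
   the other variables); it induces the face alpha_i^d : I^n -> I^(n+1)
   inserting d in coordinate i (here i : 'I_n.+1 is 0-indexed). *)
Definition face n (i : 'I_n.+1) (d : bool) : Bmor n.+1 n :=
  @BMor n.+1 n (fun x => match x with
                       | inl b => inl b
                       | inr j => match unlift i j with
                                  | None => inl d
                                  | Some j' => inr j'
                                  end
                       end) erefl erefl.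

(* The B-map [n] -> [n+1], x_j |-> x_(j+1); it induces the projection
   I^(n+1) -> I^n forgetting the first coordinate. *)
Definition shift n : Bmor n n.+1 :=
  @BMor n n.+1 (ptmap (lift ord0)) erefl erefl.

(* f : [n] -> [m]  gives  f + id : [n+1] -> [m+1], the new variable being
   the last one x_(n+1) |-> x_(m+1). *)
Definition extend n m (f : Bmor n m) : Bmor n.+1 m.+1 :=
  @BMor n.+1 m.+1 (fun x => match x with
                          | inl b => inl b
                          | inr j => match unlift ord_max j with
                                     | None => inr ord_max
                                     | Some j' => ptmap (lift ord_max) (f (inr j'))
                                     end
                          end) erefl erefl.

Lemma extend_id n : extend (bid n) = bid n.+1.
Proof.
apply: Bmor_eq => [[b|j]] //=.
by case: unliftP => [j'|] E; rewrite E.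
Qed.

Lemma extend_comp n m l (g : Bmor m l) (f : Bmor n m) :
  extend (bcomp g f) = bcomp (extend g) (extend f).
Proof.
apply: Bmor_eq => [[b|j]] //=.
case: unliftP => [j'|] _ /=; last by rewrite unlift_none.
case Ef: (f (inr j')) => [b|k] /=.
  by case: b Ef => _; rewrite ?bfun_bot ?bfun_top.
by rewrite liftK.
Qed.

Lemma face_extend n m (f : Bmor n m) (d : bool) :
  bcomp (face ord_max d) (extend f) = bcomp f (face ord_max d).
Proof.
apply: Bmor_eq => [[b|j]] /=; first by case: b; rewrite ?bfun_bot ?bfun_top.
case: unliftP => [j'|] _ /=; last first.
  by rewrite unlift_none; case: d; rewrite ?bfun_bot ?bfun_top.
by case: (f (inr j')) => [b|k] //=; rewrite liftK.
Qed.

(* Cartesian cubical sets: presheaves on B^op, i.e. functors B -> Set. *)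
Record cSet := CSet {
  cobj :> nat -> Type;
  cact : forall n m, Bmor n m -> cobj n -> cobj m;
  cact_id : forall n x, cact (bid n) x = x;
  cact_comp : forall n m l (g : Bmor m l) (f : Bmor n m) x,
      cact (bcomp g f) x = cact g (cact f x) }.
Arguments cact {c n m}.

Record cMap (X Y : cSet) := CMap {
  cmap :> forall n, X n -> Y n;
  cmap_nat : forall n m (f : Bmor n m) x, cmap (cact f x) = cact f (cmap x) }.
Arguments cmap {X Y} c n x.

Definition ceq X Y (f g : cMap X Y) : Prop := forall n x, f n x = g n x.

Lemma ccomp_nat X Y Z (g : cMap Y Z) (f : cMap X Y) n m (h : Bmor n m) x :
  g m (f m (cact h x)) = cact h (g n (f n x)).
Proof. by rewrite !cmap_nat. Qed.

Definition ccomp X Y Z (g : cMap Y Z) (f : cMap X Y) : cMap X Z :=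
  @CMap X Z (fun n x => g n (f n x)) (ccomp_nat g f).

Definition Term : cSet :=
  @CSet (fun _ => unit) (fun _ _ _ x => x) (fun _ _ => erefl) (fun _ _ _ _ _ _ => erefl).

Definition toTerm (X : cSet) : cMap X Term :=
  @CMap X Term (fun _ _ => tt) (fun _ _ _ _ => erefl).

Lemma prodc_id (X Y : cSet) n (x : X n * Y n) :
  (cact (bid n) x.1, cact (bid n) x.2) = x.
Proof. by rewrite !cact_id; case: x. Qed.
Lemma prodc_comp (X Y : cSet) n m l (g : Bmor m l) (f : Bmor n m) (x : X n * Y n) :
  (cact (bcomp g f) x.1, cact (bcomp g f) x.2) =
  (cact g (cact f x.1, cact f x.2).1, cact g (cact f x.1, cact f x.2).2).
Proof. by rewrite !cact_comp. Qed.

Definition prodc (X Y : cSet) : cSet :=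
  @CSet (fun n => (X n * Y n)%type)
        (fun n m f x => (cact f x.1, cact f x.2))
        (@prodc_id X Y) (@prodc_comp X Y).

Lemma pmap1_nat Z X Y (g : cMap X Y) n m (f : Bmor n m) (x : prodc Z X n) :
  ((cact f x.1, cact f x.2).1, g m (cact f x.1, cact f x.2).2)
  = (cact f (x.1, g n x.2).1, cact f (x.1, g n x.2).2).
Proof. by rewrite /= cmap_nat. Qed.
Definition pmap1 Z X Y (g : cMap X Y) : cMap (prodc Z X) (prodc Z Y) :=
  @CMap (prodc Z X) (prodc Z Y) (fun n x => (x.1, g n x.2)) (@pmap1_nat Z X Y g).

Lemma pmapl_nat Z X Y (g : cMap X Y) n m (f : Bmor n m) (x : prodc X Z n) :
  (g m (cact f x.1, cact f x.2).1, (cact f x.1, cact f x.2).2)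
  = (cact f (g n x.1, x.2).1, cact f (g n x.1, x.2).2).
Proof. by rewrite /= cmap_nat. Qed.
Definition pmapl Z X Y (g : cMap X Y) : cMap (prodc X Z) (prodc Y Z) :=
  @CMap (prodc X Z) (prodc Y Z) (fun n x => (g n x.1, x.2)) (@pmapl_nat Z X Y g).

(* representables: I^n = B([n], -) *)
Lemma bcomp_id1 n m (g : Bmor n m) : bcomp (bid m) g = g.
Proof. exact: Bmor_eq. Qed.
Lemma bcomp_assoc n m l k (h : Bmor l k) (f : Bmor m l) (g : Bmor n m) :
  bcomp (bcomp h f) g = bcomp h (bcomp f g).
Proof. exact: Bmor_eq. Qed.

Definition Rep (n : nat) : cSet :=
  @CSet (fun m => Bmor n m) (fun m l f g => bcomp f g)
        (fun m g => bcomp_id1 g) (fun m l k h f g => bcomp_assoc h f g).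

Lemma yon_nat n n' (d : Bmor n' n) m l (f : Bmor m l) (g : Rep n m) :
  bcomp (bcomp f g) d = bcomp f (bcomp g d).
Proof. exact: bcomp_assoc. Qed.
Definition yon n n' (d : Bmor n' n) : cMap (Rep n) (Rep n') :=
  @CMap (Rep n) (Rep n') (fun m g => bcomp g d) (@yon_nat n n' d).

(* alpha_i^d : I^n -> I^(n+1) ; i : 'I_n.+1 is coordinate i+1 *)
Definition alpha n (i : 'I_n.+1) (d : bool) : cMap (Rep n) (Rep n.+1) :=
  yon (face i d).

Definition proj1c n : cMap (Rep n.+1) (Rep n) := yon (shift n).

Definition inBox n (e : bool) m (g : Bmor n.+1 m) : Prop :=
  exists (i : 'I_n.+1) (d : bool), (i, d) <> (ord0, e) /\
    exists h : Rep n m, g = alpha i d m h.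

Lemma inBox_act n e m l (f : Bmor m l) (g : Bmor n.+1 m) :
  inBox e g -> inBox e (bcomp f g).
Proof.
case=> i [d [ne [h ->]]]; exists i, d; split => //.
by exists (bcomp f h); rewrite /= bcomp_assoc.
Qed.

Lemma sig_eq (A : Type) (P : A -> Prop) (x y : sig P) :
  proj1_sig x = proj1_sig y -> x = y.
Proof.
case: x y => x px [y py] /= E; subst y; f_equal; apply: proof_irrelevance.
Qed.

Definition Box_act n e m l (f : Bmor m l) (x : {g : Bmor n.+1 m | inBox e g}) :
  {g : Bmor n.+1 l | inBox e g} :=
  exist _ (bcomp f (proj1_sig x)) (inBox_act f (proj2_sig x)).

Lemma Box_id n e m (x : {g : Bmor n.+1 m | inBox e g}) : Box_act (bid m) x = x.
Proof. by apply: sig_eq; rewrite /= bcomp_id1. Qed.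
Lemma Box_comp n e m l k (h : Bmor l k) (f : Bmor m l)
  (x : {g : Bmor n.+1 m | inBox e g}) :
  Box_act (bcomp h f) x = Box_act h (Box_act f x).
Proof. by apply: sig_eq; rewrite /= bcomp_assoc. Qed.

Definition Box (n : nat) (e : bool) : cSet :=
  @CSet (fun m => {g : Bmor n.+1 m | inBox e g}) (@Box_act n e)
        (@Box_id n e) (@Box_comp n e).

Definition boxincl n e : cMap (Box n e) (Rep n.+1) :=
  @CMap (Box n e) (Rep n.+1) (fun m x => proj1_sig x) (fun _ _ _ _ => erefl).

(* Path object A^I (via I^n x I = I^(n+1), new variable last) and      *)
(* p : A^I -> A^(dI) = A x A induced by the endpoints 0, 1.            *)
Lemma Path_id (A : cSet) n (x : A n.+1) : cact (extend (bid n)) x = x.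
Proof. by rewrite extend_id cact_id. Qed.
Lemma Path_comp (A : cSet) n m l (g : Bmor m l) (f : Bmor n m) (x : A n.+1) :
  cact (extend (bcomp g f)) x = cact (extend g) (cact (extend f) x).
Proof. by rewrite extend_comp cact_comp. Qed.

Definition PathObj (A : cSet) : cSet :=
  @CSet (fun n => A n.+1) (fun n m f x => cact (extend f) x)
        (@Path_id A) (@Path_comp A).

Lemma ev_nat (A : cSet) (d : bool) n m (f : Bmor n m) (x : A n.+1) :
  cact (face ord_max d) (cact (extend f) x) = cact f (cact (face ord_max d) x).
Proof. by rewrite -!cact_comp face_extend. Qed.

Definition ev (A : cSet) (d : bool) : cMap (PathObj A) A :=
  @CMap (PathObj A) A (fun n x => cact (face ord_max d) x) (@ev_nat A d).

Lemma pathp_nat (A : cSet) n m (f : Bmor n m) (x : PathObj A n) :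
  (ev A false m (cact f x), ev A true m (cact f x))
  = (cact f (ev A false n x, ev A true n x).1, cact f (ev A false n x, ev A true n x).2).
Proof. by rewrite !cmap_nat. Qed.

Definition pathp (A : cSet) : cMap (PathObj A) (prodc A A) :=
  @CMap (PathObj A) (prodc A A) (fun n x => (ev A false n x, ev A true n x))
        (@pathp_nat A).

(* Dimensions n >= 1, k >= 1, j >= 1 are written n.+1, k.+1, j.+1.     *)
Record UKF (Y X : cSet) (f : cMap Y X) := {
  fill : forall (k n : nat) (e : bool)
           (a : cMap (prodc (Rep k.+1) (Rep n.+1)) X)
           (b : cMap (prodc (Rep k.+1) (Box n e)) Y),
           ceq (ccomp f b) (ccomp a (pmap1 (Rep k.+1) (boxincl n e))) ->
           cMap (prodc (Rep k.+1) (Rep n.+1)) Y;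
  fill_box : forall k n e a b (H : ceq (ccomp f b) (ccomp a (pmap1 _ (boxincl n e)))),
      ceq (ccomp (@fill k n e a b H) (pmap1 _ (boxincl n e))) b;
  fill_over : forall k n e a b (H : ceq (ccomp f b) (ccomp a (pmap1 _ (boxincl n e)))),
      ceq (ccomp f (@fill k n e a b H)) a;
  fill_unif : forall k j n e a b
      (H : ceq (ccomp f b) (ccomp a (pmap1 _ (boxincl n e))))
      (al : cMap (Rep j.+1) (Rep k.+1))
      (H' : ceq (ccomp f (ccomp b (pmapl _ al)))
                (ccomp (ccomp a (pmapl _ al)) (pmap1 _ (boxincl n e)))),
      ceq (ccomp (@fill k n e a b H) (pmapl _ al))
          (@fill j n e (ccomp a (pmapl _ al)) (ccomp b (pmapl _ al)) H') }.

(* normality: for all n >= 0, the box of dimension n+1 *)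
Definition normalUKF (Y X : cSet) (f : cMap Y X) (F : UKF f) : Prop :=
  forall (k n : nat) (e : bool) (c : cMap (prodc (Rep k.+1) (Rep n)) Y)
    (H : ceq (ccomp f (ccomp (ccomp c (pmap1 _ (proj1c n))) (pmap1 _ (boxincl n e))))
             (ccomp (ccomp f (ccomp c (pmap1 _ (proj1c n)))) (pmap1 _ (boxincl n e)))),
    ceq (@fill _ _ _ F k n e (ccomp f (ccomp c (pmap1 _ (proj1c n))))
               (ccomp (ccomp c (pmap1 _ (proj1c n))) (pmap1 _ (boxincl n e))) H)
        (ccomp c (pmap1 _ (proj1c n))).

Definition UKC (A : cSet) := UKF (toTerm A).

(* Main.v *)
Require Import Defs.
From mathcomp Require Import all_boot.
From Stdlib Require Import FunctionalExtensionality ProofIrrelevance.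
Set Implicit Arguments. Unset Strict Implicit. Unset Printing Implicit Defensive.

Definition wk m : Bmor m m.+1 := @BMor m m.+1 (ptmap (lift ord_max)) erefl erefl.
Definition sigm m (t : Pt m) : Bmor m.+1 m :=
  @BMor m.+1 m (fun x => match x with inl b => inl b
     | inr j => match unlift ord_max j with None => t | Some j' => inr j' end end) erefl erefl.

Lemma L1 m t : bcomp (@sigm m t) (wk m) = bid m.
Proof. by apply: Bmor_eq => [[b|j]] //=; rewrite liftK. Qed.

Lemma L2 n m (f : Bmor n m) t : bcomp f (@sigm n t) = bcomp (sigm (f t)) (extend f).
Proof.
apply: Bmor_eq => [[b|j]] /=; first by case: b; rewrite ?bfun_bot ?bfun_top.
case: unliftP => [j'|] _ /=; last by rewrite unlift_none.
case: (f (inr j')) => [b|k] //=; by rewrite liftK.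
Qed.

Lemma L3 m d : sigm (inl d) = face (@ord_max m) d.
Proof. by apply: Bmor_eq => [[b|j]]. Qed.

Lemma L4 n m (f : Bmor n m) : bcomp (extend f) (wk n) = bcomp (wk m) f.
Proof.
apply: Bmor_eq => [[b|j]] /=; first by case: b; rewrite ?bfun_bot ?bfun_top.
rewrite liftK; case: (f (inr j)) => [b|k] //=.
Qed.

Lemma L5 m : bcomp (sigm (inr ord_max)) (extend (wk m)) = bid m.+1.
Proof.
apply: Bmor_eq => [[b|j]] //=.
case: unliftP => [j'|] -> /=; last by rewrite unlift_none.
by rewrite liftK.
Qed.

Lemma L6 m d : bcomp (face (@ord_max m) d) (wk m) = bid m.
Proof. by apply: Bmor_eq => [[b|j]] //=; rewrite liftK. Qed.

Lemma L10 n m (g : Bmor n.+2 m) : bcomp g (shift n.+1) (inr ord_max) = g (inr ord_max).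
Proof. by rewrite /=; congr (g (inr _)); apply: val_inj. Qed.

Lemma L11 n m (g : Bmor n.+2 m) :
  bcomp (bcomp g (shift n.+1)) (wk n) = bcomp (bcomp g (wk n.+1)) (shift n).
Proof. apply: Bmor_eq => [[b|j]] //=; congr (g (inr _)); apply: val_inj; rewrite /= /bump /= leqNgt ltn_ord /= ltnS leqNgt ltn_ord. by case: (nat_of_ord j). Qed.

Lemma LL n (i : 'I_n.+1) (k : 'I_n) :
  lift ord_max (lift i k) = lift (lift ord_max i) (lift ord_max k).
Proof. apply: val_inj. rewrite [LHS]lift_max /=. rewrite /bump.
have hk := ltn_ord k. have hi := ltn_ord i.
rewrite !(leqNgt n) hk. have -> : (n < i) = false by rewrite ltnNge -ltnS hi. by rewrite /= !add0n. Qed.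

Lemma face_self n (i : 'I_n.+1) d : face i d (inr i) = inl d.
Proof. by rewrite /= unlift_none. Qed.
Lemma face_lift n (i : 'I_n.+1) d k : face i d (inr (lift i k)) = inr k.
Proof. by rewrite /= liftK. Qed.

Lemma FW n (i : 'I_n.+1) d :
  bcomp (face (lift ord_max i) d) (wk n.+1) = bcomp (wk n) (face i d).
Proof.
apply: Bmor_eq => [[b|j]] //.
change (face (lift ord_max i) d (inr (lift ord_max j)) = ptmap (lift ord_max) (face i d (inr j))).
case: (unliftP i j) => [k|] ->.
  by rewrite (LL i k) !face_lift.
by rewrite !face_self.
Qed.

Lemma extend_max n m (f : Bmor n m) : extend f (inr ord_max) = inr ord_max.
Proof. by rewrite /= unlift_none. Qed.
Lemma extend_lift n m (f : Bmor n m) j :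
  extend f (inr (lift ord_max j)) = ptmap (lift ord_max) (f (inr j)).
Proof. by rewrite /= liftK. Qed.

Lemma EF n (i : 'I_n.+1) d : extend (face i d) = face (lift ord_max i) d.
Proof.
apply: Bmor_eq => [[b|j]] //.
case: (unliftP ord_max j) => [j'|] ->.
  rewrite extend_lift.
  case: (unliftP i j') => [k|] ->.
    by rewrite (LL i k) !face_lift.
  by rewrite !face_self.
rewrite extend_max.
have E : (ord_max : 'I_n.+2) = lift (lift ord_max i) ord_max.
  apply: val_inj. rewrite /= /bump (leqNgt n.+1) ltn_ord /= add0n -ltnS ltn_ord. done.
rewrite [X in face _ _ (inr X)]E.
by rewrite face_lift.
Qed.

Lemma bcomp_id2 n m (g : Bmor n m) : bcomp g (bid n) = g.
Proof. exact: Bmor_eq. Qed.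

Lemma bfun_inl n m (f : Bmor n m) d : f (inl d) = inl d.
Proof. by case: d; rewrite ?bfun_bot ?bfun_top. Qed.

Lemma B1 n e m (g : Bmor n.+2 m) j : @inBox n.+1 e m g -> g (inr ord_max) = inr j ->
  @inBox n e m (bcomp g (wk n.+1)).
Proof.
case=> i [d [ne [h E]]] Hj.
case: (unliftP ord_max i) => [i'|] Ei.
  exists i', d; split.
    case=> E1 E2; apply: ne; rewrite Ei E1 E2; congr (_, _); exact: val_inj.
  exists (bcomp h (wk n)).
  rewrite E Ei /= bcomp_assoc FW -bcomp_assoc. done.
exfalso; move: Hj; rewrite E Ei /=.
change (h (face ord_max d (inr ord_max)) = inr j -> False).
by rewrite (face_self (@ord_max n.+1)) bfun_inl.
Qed.

Lemma B2 n e m (g : Bmor n.+1 m) : @inBox n e m g -> @inBox n.+1 e m.+1 (extend g).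
Proof.
case=> i [d [ne [h ->]]]; exists (lift ord_max i), d; split.
  case=> E1 E2; apply: ne; rewrite E2; congr (_, _); apply: val_inj.
  by move: E1; rewrite /bump leqNgt ltn_ord.
exists (extend h).
change (extend (bcomp h (face i d)) = bcomp (extend h) (face (lift ord_max i) d)).
by rewrite extend_comp EF.
Qed.

Lemma B3 n e m (v : Bmor n.+1 m) d : @inBox n.+1 e m (bcomp v (face ord_max d)).
Proof. by exists ord_max, d; split; [case|exists v]. Qed.

Definition sel (X : Type) (d : bool) (p : X * X) : X := if d then p.2 else p.1.

Lemma cMap_eq X Y (f g : cMap X Y) : ceq f g -> f = g.
Proof.
case: f g => f fn [g gn] /= E.
have Efg : f = g.
  apply: functional_extensionality_dep => n; apply: functional_extensionality => x; exact: E.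
subst g; f_equal; apply: proof_irrelevance.
Qed.

Lemma fill_ext Y X (f : cMap Y X) (F : UKF f) k n e a1 a2 b1 b2 H1 H2 :
  a1 = a2 -> b1 = b2 -> @fill _ _ _ F k n e a1 b1 H1 = @fill _ _ _ F k n e a2 b2 H2.
Proof. move=> ea eb; subst; by rewrite (proof_irrelevance _ H1 H2). Qed.


Definition bval_aux (A : cSet) k n e
  (a : cMap (prodc (Rep k.+1) (Rep n.+1)) (prodc A A))
  (b : cMap (prodc (Rep k.+1) (Box n e)) (PathObj A)) m (u : Bmor k.+1 m)
  (g : Bmor n.+2 m) (Hg : @inBox n.+1 e m g) t : g (inr ord_max) = t -> A m :=
  match t as t0 return g (inr ord_max) = t0 -> A m with
  | inl d => fun _ => sel d (a m (u, bcomp g (wk n.+1)))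
  | inr j => fun E => cact (sigm (inr j))
       (b m (u, exist (fun g1 => inBox e g1) (bcomp g (wk n.+1)) (B1 Hg E)))
  end.

Definition bval (A : cSet) k n e a b m u g Hg :=
  @bval_aux A k n e a b m u g Hg (g (inr ord_max)) erefl.

Lemma bvalE (A : cSet) k n e a b m u (g : Bmor n.+2 m) Hg t (E : g (inr ord_max) = t) :
  @bval A k n e a b m u g Hg = @bval_aux A k n e a b m u g Hg t E.
Proof. by rewrite /bval; case: t / E. Qed.

Lemma bval_l (A : cSet) k n e a b m u (g : Bmor n.+2 m) Hg d : g (inr ord_max) = inl d ->
  @bval A k n e a b m u g Hg = sel d (a m (u, bcomp g (wk n.+1))).
Proof. by move=> E; rewrite (@bvalE A k n e a b m u g Hg _ E). Qed.

Lemma bval_r (A : cSet) k n e (a : cMap (prodc (Rep k.+1) (Rep n.+1)) (prodc A A))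
  (b : cMap (prodc (Rep k.+1) (Box n e)) (PathObj A)) m u (g : Bmor n.+2 m) Hg j : g (inr ord_max) = inr j ->
  forall P, @bval A k n e a b m u g Hg =
    cact (sigm (inr j)) (b m (u, exist (fun g1 => inBox e g1) (bcomp g (wk n.+1)) P)).
Proof.
move=> E P; rewrite (@bvalE A k n e a b m u g Hg _ E) /=.
by rewrite (proof_irrelevance _ (B1 Hg E) P).
Qed.

Lemma bsig (A : cSet) k n e (b : cMap (prodc (Rep k.+1) (Box n e)) (PathObj A)) m u
  (g1 g2 : Bmor n.+1 m) P Q : g1 = g2 ->
  b m (u, exist (fun g => inBox e g) g1 P) = b m (u, exist (fun g => inBox e g) g2 Q).
Proof. by move=> E; subst; rewrite (proof_irrelevance _ P Q). Qed.

Lemma sel_act (A : cSet) m l (f : Bmor m l) d (p : A m * A m) :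
  sel d (cact f p.1, cact f p.2) = cact f (sel d p).
Proof. by case: d. Qed.

Lemma bval_nat (A : cSet) k n e (a : cMap (prodc (Rep k.+1) (Rep n.+1)) (prodc A A))
  (b : cMap (prodc (Rep k.+1) (Box n e)) (PathObj A))
  (H : ceq (ccomp (pathp A) b) (ccomp a (pmap1 _ (boxincl n e))))
  m l (f : Bmor m l) u (g : Bmor n.+2 m) Hg :
  @bval A k n e a b l (bcomp f u) (bcomp f g) (inBox_act f Hg)
  = cact f (@bval A k n e a b m u g Hg).
Proof.
case Eg: (g (inr ord_max)) => [d|j].
  have Efg : bcomp f g (inr ord_max) = inl d by rewrite /= Eg bfun_inl.
  rewrite (bval_l _ _ _ _ Efg) (bval_l _ _ _ _ Eg) bcomp_assoc.
  have := cmap_nat a f (u, bcomp g (wk n.+1)). rewrite /= => ->.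
  by rewrite sel_act.
rewrite (bval_r _ _ _ _ Eg (B1 Hg Eg)).
case Ef: (f (inr j)) => [d|j2].
  have Efg : bcomp f g (inr ord_max) = inl d by rewrite /= Eg.
  rewrite (bval_l _ _ _ _ Efg) -cact_comp L2 Ef L3 cact_comp.
  have := cmap_nat b f (u, exist (fun g1 => inBox e g1) (bcomp g (wk n.+1)) (B1 Hg Eg)).
  rewrite /= => <-.
  have := H l (bcomp f u, Box_act f (exist (fun g1 => inBox e g1) (bcomp g (wk n.+1)) (B1 Hg Eg))).
  rewrite /= => E.
  have -> : cact (face ord_max d) (b l (bcomp f u, Box_act f (exist (fun g1 => inBox e g1) (bcomp g (wk n.+1)) (B1 Hg Eg))))
     = sel d (pathp A l (b l (bcomp f u, Box_act f (exist (fun g1 => inBox e g1) (bcomp g (wk n.+1)) (B1 Hg Eg))))) by case: d {Ef Efg}.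
  by rewrite [pathp _ _ _]E bcomp_assoc.
have Efg : bcomp f g (inr ord_max) = inr j2 by rewrite /= Eg.
have P : inBox e (bcomp (bcomp f g) (wk n.+1)) by apply: (B1 (inBox_act f Hg) Efg).
rewrite (bval_r _ _ _ _ Efg P) -cact_comp L2 Ef cact_comp.
have := cmap_nat b f (u, exist (fun g1 => inBox e g1) (bcomp g (wk n.+1)) (B1 Hg Eg)).
rewrite /= => <-.
by congr (cact _ _); apply: bsig; rewrite bcomp_assoc.
Qed.

Definition bmap (A : cSet) k n e (a : cMap (prodc (Rep k.+1) (Rep n.+1)) (prodc A A))
  (b : cMap (prodc (Rep k.+1) (Box n e)) (PathObj A))
  (H : ceq (ccomp (pathp A) b) (ccomp a (pmap1 _ (boxincl n e)))) :
  cMap (prodc (Rep k.+1) (Box n.+1 e)) A :=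
  @CMap (prodc (Rep k.+1) (Box n.+1 e)) A
    (fun m x => @bval A k n e a b m x.1 (proj1_sig x.2) (proj2_sig x.2))
    (fun m l f x => @bval_nat A k n e a b H m l f x.1 (proj1_sig x.2) (proj2_sig x.2)).

Lemma bmapH (A : cSet) k n e (b' : cMap (prodc (Rep k.+1) (Box n e)) A) :
  ceq (ccomp (toTerm A) b') (ccomp (toTerm _) (pmap1 (Rep k.+1) (boxincl n e))).
Proof. by []. Qed.

Definition cfill (A : cSet) (F : UKF (toTerm A)) k n e a b H :=
  @fill _ _ _ F k n.+1 e (toTerm _) (@bmap A k n e a b H) (bmapH _).

Lemma fillG_nat (A : cSet) (F : UKF (toTerm A)) k n e a b H
  m l (f : Bmor m l) (x : prodc (Rep k.+1) (Rep n.+1) m) :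
  @cfill A F k n e a b H l.+1 (bcomp (wk l) (bcomp f x.1), extend (bcomp f x.2))
  = cact (extend f) (@cfill A F k n e a b H m.+1 (bcomp (wk m) x.1, extend x.2)).
Proof.
rewrite -cmap_nat /=.
by rewrite -bcomp_assoc -L4 bcomp_assoc extend_comp.
Qed.

Definition fillG (A : cSet) (F : UKF (toTerm A)) k n e a b H :
  cMap (prodc (Rep k.+1) (Rep n.+1)) (PathObj A) :=
  @CMap (prodc (Rep k.+1) (Rep n.+1)) (PathObj A)
    (fun m x => @cfill A F k n e a b H m.+1 (bcomp (wk m) x.1, extend x.2))
    (@fillG_nat A F k n e a b H).

Lemma fillG_box (A : cSet) (F : UKF (toTerm A)) k n e a b H :
  ceq (ccomp (@fillG A F k n e a b H) (pmap1 _ (boxincl n e))) b.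
Proof.
move=> m [u [g Hg]] /=.
have := fill_box F (bmapH (@bmap A k n e a b H))
   (bcomp (wk m) u, exist (fun g1 => inBox e g1) (extend g) (B2 Hg)).
rewrite /= => ->.
have Eg : extend g (inr ord_max) = inr ord_max by rewrite extend_max.
have P : inBox e (bcomp (extend g) (wk n.+1)) by apply: B1 (B2 Hg) Eg.
rewrite (bval_r _ _ _ _ Eg P).
have -> : b m.+1 (bcomp (wk m) u, exist (fun g1 => inBox e g1) (bcomp (extend g) (wk n.+1)) P)
   = b m.+1 (@cact (prodc (Rep k.+1) (Box n e)) _ _ (wk m) (u, exist (fun g1 => inBox e g1) g Hg)).
  by apply: bsig; rewrite L4.
by rewrite cmap_nat /= -cact_comp L5 cact_id.
Qed.

Lemma fillG_ev (A : cSet) (F : UKF (toTerm A)) k n e a b H m u v d :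
  cact (face ord_max d) (@fillG A F k n e a b H m (u, v)) = sel d (a m (u, v)).
Proof.
rewrite /= -cmap_nat /= -bcomp_assoc L6 bcomp_id1 face_extend.
have := fill_box F (bmapH (@bmap A k n e a b H))
   (u, exist (fun g1 => inBox e g1) (bcomp v (face ord_max d)) (B3 e v d)).
rewrite /= => ->.
have Eg : bcomp v (face ord_max d) (inr ord_max) = inl d.
  by rewrite /= unlift_none bfun_inl.
by rewrite (bval_l _ _ _ _ Eg) bcomp_assoc L6 bcomp_id2.
Qed.

Lemma fillG_over (A : cSet) (F : UKF (toTerm A)) k n e a b H :
  ceq (ccomp (pathp A) (@fillG A F k n e a b H)) a.
Proof.
move=> m [u v].
change ((cact (face ord_max false) (@fillG A F k n e a b H m (u, v)),
         cact (face ord_max true) (@fillG A F k n e a b H m (u, v))) = a m (u, v)).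
rewrite !fillG_ev /=. by case: (a m (u, v)).
Qed.

Lemma fillG_unif (A : cSet) (F : UKF (toTerm A)) k j n e a b
  (H : ceq (ccomp (pathp A) b) (ccomp a (pmap1 _ (boxincl n e))))
  (al : cMap (Rep j.+1) (Rep k.+1))
  (H' : ceq (ccomp (pathp A) (ccomp b (pmapl _ al)))
            (ccomp (ccomp a (pmapl _ al)) (pmap1 _ (boxincl n e)))) :
  ceq (ccomp (@fillG A F k n e a b H) (pmapl _ al))
      (@fillG A F j n e (ccomp a (pmapl _ al)) (ccomp b (pmapl _ al)) H').
Proof.
move=> m [u v] /=.
have -> : bcomp (wk m) (al m u) = al m.+1 (bcomp (wk m) u).
  by have := cmap_nat al (wk m) u; rewrite /= => ->.
have := @fill_unif _ _ _ F k j n.+1 e _ _ (bmapH (@bmap A k n e a b H)) al (fun _ _ => erefl)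
          m.+1 (bcomp (wk m) u, extend v).
rewrite /= /cfill => ->.
apply: (congr1 (fun c : cMap (prodc (Rep j.+1) (Rep n.+2)) A => c m.+1 (bcomp (wk m) u, extend v))).
apply: fill_ext; apply: cMap_eq => // l [x [g Hg]] //.
Qed.

Definition GUKF (A : cSet) (F : UKF (toTerm A)) : UKF (pathp A) :=
  @Build_UKF _ _ (pathp A) (fun k n e a b H => @fillG A F k n e a b H)
    (fun k n e a b H => @fillG_box A F k n e a b H)
    (fun k n e a b H => @fillG_over A F k n e a b H)
    (fun k j n e a b H al H' => @fillG_unif A F k j n e a b H al H').

Lemma cun_nat (A : cSet) k n (c : cMap (prodc (Rep k.+1) (Rep n)) (PathObj A))
  m l (f : Bmor m l) (x : prodc (Rep k.+1) (Rep n.+1) m) :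
  cact (sigm ((bcomp f x.2) (inr ord_max))) (c l (bcomp f x.1, bcomp (bcomp f x.2) (wk n)))
  = cact f (cact (sigm (x.2 (inr ord_max))) (c m (x.1, bcomp x.2 (wk n)))).
Proof.
rewrite bcomp_assoc.
have := cmap_nat c f (x.1, bcomp x.2 (wk n)). rewrite /= => ->.
by rewrite -!cact_comp L2.
Qed.

Definition cun (A : cSet) k n (c : cMap (prodc (Rep k.+1) (Rep n)) (PathObj A)) :
  cMap (prodc (Rep k.+1) (Rep n.+1)) A :=
  @CMap (prodc (Rep k.+1) (Rep n.+1)) A
    (fun m x => cact (sigm (x.2 (inr ord_max))) (c m (x.1, bcomp x.2 (wk n))))
    (@cun_nat A k n c).

Lemma GUKF_normal (A : cSet) (F : UKF (toTerm A)) : normalUKF F -> normalUKF (GUKF F).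
Proof.
move=> NF k n e c H m [u v] /=.
rewrite /cfill.
have E : forall H1, @fill _ _ _ F k n.+1 e (toTerm _)
   (bmap H) H1 =
   @fill _ _ _ F k n.+1 e (ccomp (toTerm A) (ccomp (cun c) (pmap1 _ (proj1c n.+1))))
      (ccomp (ccomp (cun c) (pmap1 _ (proj1c n.+1))) (pmap1 _ (boxincl n.+1 e))) (fun _ _ => erefl).
  move=> H1; apply: fill_ext; apply: cMap_eq => // l [x [g Hg]] /=.
  have -> : g (inr (lift ord0 ord_max)) = g (inr ord_max) by exact: (L10 g).
  rewrite L11.
  case Eg: (g (inr ord_max)) => [d|j].
    rewrite (bval_l _ _ _ _ Eg) L3 /=. by case: d Eg.
  by rewrite (bval_r _ _ _ _ Eg (B1 Hg Eg)).
rewrite E NF.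
change (cact (sigm (bcomp (extend v) (shift n.+1) (inr ord_max))) (c m.+1 (bcomp (wk m) u, bcomp (bcomp (extend v) (shift n.+1)) (wk n))) = c m (u, bcomp v (shift n))).
rewrite L10 extend_max L11 L4 bcomp_assoc.
have := cmap_nat c (wk m) (u, bcomp v (shift n)). rewrite /= => ->.
by rewrite -cact_comp L5 cact_id.
Qed.

Theorem lemma3p10 (A : cSet) (F : UKF (toTerm A)) :
  normalUKF F -> exists G : UKF (pathp A), normalUKF G.
Proof. by move=> NF; exists (GUKF F); apply: GUKF_normal. Qed.
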